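(* Let $q^*$ be the unique positive solution of the equation $q\log 2=2^{q-1}-1$, and let $0<q<q^*$. For $p>q$ let $V(x)=\frac{|x|^p}{p}-\frac{|x|^q}{q}$ on ${\mathbb R}$ and $E(\rho)=\frac12\iint V(x-y)\,d\rho(x)\,d\rho(y)$ for $\rho\in\mathcal P({\mathbb R})$. Then there exists $p_*=p_*(q)>q$ such that for all $p\in(q,p_* )$ and all $1\le\lambda<\infty$, the measure $\rho^*=\frac12\delta_0+\frac12\delta_1$ is not a $d_\lambda$-local minimizer of $E$.
   Context: $\mathcal P_\lambda({\mathbb R})$ is the set of Borel probability measures on ${\mathbb R}$ with finite moment of order $\lambda$, and $d_\lambda(\mu,\nu)=\big[\inf_{\pi\in\Pi(\mu,\nu)}\iint|x-y|^\lambda d\pi(x,y)\big]^{1/\lambda}$ is the $\lambda$-Wasserstein distance, $\Pi(\mu,\nu)$ being the set of couplings. A measure $\rho\in\mathcal P_\lambda({\mathbb R})$ is a $d_\lambda$-local minimizer of $E$ if there is $\eta>0$ such that $E(\rho)\le E(\rho')$ for all $\rho'\in\mathcal P_\lambda({\mathbb R})$ with $d_\lambda(\rho,\rho')\le\eta$. *)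

(* Defs.v *)
From HB Require Import structures.
From mathcomp Require Import all_boot all_order all_algebra.
From mathcomp Require Import all_classical all_reals all_analysis.
Set Implicit Arguments. Unset Strict Implicit. Unset Printing Implicit Defensive.
Import Order.TTheory GRing.Theory Num.Theory.
Import numFieldNormedType.Exports.
Local Open Scope classical_set_scope.
Local Open Scope ring_scope.

Section defs.
Context (R : realType).
Definition half_dirac (a : R) : {measure set R -> \bar R} :=
  mscale (2^-1)%:nng (@dirac _ R a R).

Local Open Scope ereal_scope.

Definition rho_star_fun : set R -> \bar R :=
  measure_add (half_dirac 0) (half_dirac 1).

HB.instance Definition _ := Measure.on rho_star_fun.

Lemma rho_star_setT : rho_star_fun setT = 1.
Proof.
rewrite /rho_star_fun measure_addE /half_dirac.
change ((2^-1)%:E * (@dirac _ R 0%R R) setT + (2^-1)%:E * (@dirac _ R 1%R R) setT = 1).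
rewrite !diracT !mule1 -EFinD.
by congr EFin; rewrite [in RHS](splitr 1) mul1r.
Qed.
HB.instance Definition _ := Measure_isProbability.Build _ _ _ rho_star_fun rho_star_setT.

Definition rho_star : probability R R := rho_star_fun.

Definition moment (lam : R) (mu : probability R R) : \bar R :=
  \int[mu]_x (`|x| `^ lam)%:E.

Definition finite_moment (lam : R) (mu : probability R R) : Prop :=
  moment lam mu < +oo.

Definition coupling (mu nu : probability R R) (pi : probability (R * R)%type R) : Prop :=
  (forall A : set R, measurable A -> pi (A `*` setT) = mu A) /\
  (forall B : set R, measurable B -> pi (setT `*` B) = nu B).

Definition wass_cost (lam : R) (mu nu : probability R R) : \bar R :=
  ereal_inf [set \int[pi]_z (`|z.1 - z.2| `^ lam)%:E | pi in coupling mu nu].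

Definition wass_dist (lam : R) (mu nu : probability R R) : R :=
  fine (wass_cost lam mu nu) `^ lam^-1.

Definition Vpot (p q : R) (x : R) : R := `|x| `^ p / p - `|x| `^ q / q.

Definition energy (p q : R) (rho : probability R R) : \bar R :=
  (2^-1)%:E * \int[rho]_x \int[rho]_y (Vpot p q (x - y))%:E.

Definition local_minimizer (lam : R) (E : probability R R -> \bar R)
  (rho : probability R R) : Prop :=
  finite_moment lam rho /\
  exists eta : R, (0 < eta)%R /\
    forall rho' : probability R R, finite_moment lam rho' ->
      (wass_dist lam rho rho' <= eta)%R -> E rho <= E rho'.
End defs.
Arguments rho_star {R}.

(* Main.v *)
Require Import Defs.
From HB Require Import structures.
From mathcomp Require Import all_boot all_order all_algebra.
From mathcomp Require Import all_classical all_reals all_analysis measurable_realfun.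
From mathcomp Require Import lra ring.
Import Order.TTheory GRing.Theory Num.Theory.
Import numFieldNormedType.Exports.
Local Open Scope classical_set_scope.
Local Open Scope ring_scope.

Section disc.
Context d (T : measurableType d) (R : realType).
Local Open Scope ereal_scope.

Definition sd (w : {nonneg R}) (x : T) : {measure set T -> \bar R} := mscale w (\d_x).

Lemma sdE w x A : sd w x A = (w%:num * (\1_A x))%:E.
Proof. by change ((w%:num)%:E * (\1_A x)%:E = (w%:num * \1_A x)%:E); rewrite EFinM. Qed.

Lemma int_sd w x (f : T -> R) : measurable_fun setT f ->
  \int[sd w x]_z (f z)%:E = (w%:num * f x)%:E.
Proof.
move=> mf.
have mfe : measurable_fun setT (fun z => (f z)%:E) by exact/measurable_EFinP.
rewrite integralE /sd !ge0_integral_mscale //; last 2 first.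
- exact: measurable_funeneg.
- exact: measurable_funepos.
rewrite !integral_dirac //; last 2 first.
- exact: measurable_funeneg.
- exact: measurable_funepos.
rewrite diracT !mul1e funeposE funenegE /= -!EFin_max -!EFinM -EFinB.
congr EFin; rewrite -mulrBr; congr (_ * _)%R.
rewrite /Num.max; case: ifPn; case: ifPn; lra.
Qed.

Lemma integrable_sd w x (f : T -> R) : measurable_fun setT f ->
  (sd w x).-integrable setT (EFin \o f).
Proof.
move=> mf; apply/integrableP; split; first exact/measurable_EFinP.
rewrite /sd ge0_integral_mscale //; last first.
  apply: measurableT_comp => //; exact/measurable_EFinP.
rewrite integral_dirac //; last by apply: measurableT_comp => //; exact/measurable_EFinP.
by rewrite diracT mul1e /= -EFinM ltry.
Qed.

Lemma integrable_add (m1 m2 : {measure set T -> \bar R}) (f : T -> \bar R) :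
  m1.-integrable setT f -> m2.-integrable setT f ->
  (measure_add m1 m2).-integrable setT f.
Proof.
move=> /integrableP[mf i1] /integrableP[_ i2]; apply/integrableP; split => //.
rewrite ge0_integral_measure_add //; last exact: measurableT_comp.
by rewrite lte_add_pinfty.
Qed.

Lemma int_add (m1 m2 : {measure set T -> \bar R}) (f : T -> R) :
  measurable_fun setT f ->
  m1.-integrable setT (EFin \o f) -> m2.-integrable setT (EFin \o f) ->
  \int[measure_add m1 m2]_z (f z)%:E = \int[m1]_z (f z)%:E + \int[m2]_z (f z)%:E.
Proof.
move=> mf i1 i2; rewrite integral_measure_add //; exact/measurable_EFinP.
Qed.

Lemma int2 w1 w2 x1 x2 (f : T -> R) : measurable_fun setT f ->
  \int[measure_add (sd w1 x1) (sd w2 x2)]_z (f z)%:E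
  = (w1%:num * f x1 + w2%:num * f x2)%:E.
Proof.
move=> mf; rewrite int_add ?int_sd ?EFinD //; exact: integrable_sd.
Qed.

Lemma int3 w1 w2 w3 x1 x2 x3 (f : T -> R) : measurable_fun setT f ->
  \int[measure_add (sd w1 x1) (measure_add (sd w2 x2) (sd w3 x3))]_z (f z)%:E
  = (w1%:num * f x1 + w2%:num * f x2 + w3%:num * f x3)%:E.
Proof.
move=> mf; rewrite int_add ?int_sd ?int2 -?EFinD ?addrA //; first exact: integrable_sd.
apply: integrable_add; exact: integrable_sd.
Qed.

Lemma int4 w1 w2 w3 w4 x1 x2 x3 x4 (f : T -> R) : measurable_fun setT f ->
  \int[measure_add (sd w1 x1) (measure_add (sd w2 x2) (measure_add (sd w3 x3) (sd w4 x4)))]_z (f z)%:E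
  = (w1%:num * f x1 + w2%:num * f x2 + w3%:num * f x3 + w4%:num * f x4)%:E.
Proof.
move=> mf; rewrite int_add ?int_sd ?int3 -?EFinD ?addrA //; first exact: integrable_sd.
apply: integrable_add; first exact: integrable_sd.
apply: integrable_add; exact: integrable_sd.
Qed.

Lemma mnormE (mu : {measure set T -> \bar R}) (P : probability T R) :
  mu setT = 1 -> mnormalize mu P = mu.
Proof.
move=> h; apply/funext => A; rewrite /mnormalize h /=.
by rewrite onee_eq0 /= invr1 mule1.
Qed.

Lemma m2E w1 w2 x1 x2 A : measure_add (sd w1 x1) (sd w2 x2) A
  = (w1%:num * \1_A x1 + w2%:num * \1_A x2)%:E.
Proof. by rewrite measure_addE !sdE EFinD. Qed.

Lemma m3E w1 w2 w3 x1 x2 x3 A :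
  measure_add (sd w1 x1) (measure_add (sd w2 x2) (sd w3 x3)) A
  = (w1%:num * \1_A x1 + w2%:num * \1_A x2 + w3%:num * \1_A x3)%:E.
Proof.
transitivity (sd w1 x1 A + measure_add (sd w2 x2) (sd w3 x3) A); first exact: measure_addE.
by rewrite sdE m2E -EFinD addrA.
Qed.

Lemma m4E w1 w2 w3 w4 x1 x2 x3 x4 A :
  measure_add (sd w1 x1) (measure_add (sd w2 x2) (measure_add (sd w3 x3) (sd w4 x4))) A
  = (w1%:num * \1_A x1 + w2%:num * \1_A x2 + w3%:num * \1_A x3 + w4%:num * \1_A x4)%:E.
Proof.
transitivity (sd w1 x1 A + measure_add (sd w2 x2) (measure_add (sd w3 x3) (sd w4 x4)) A); first exact: measure_addE.
by rewrite sdE m3E -EFinD !addrA.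
Qed.
End disc.
Arguments sd {d T R}.
Arguments int2 {d T R}.
Arguments int3 {d T R}.
Arguments int4 {d T R}.

Lemma rho_starE (R : realType) :
  (rho_star : set R -> \bar R) = measure_add (sd (2^-1)%:nng (0:R)) (sd (2^-1)%:nng (1:R)).
Proof. by []. Qed.

Lemma expR_tangent (R : realType) (m y : R) : expR m * (1 + (y - m)) <= expR y.
Proof.
have -> : y = m + (y - m) by ring.
rewrite expRD; rewrite ler_pM2l ?expR_gt0 //; last first.
have -> : m + (y - m) - m = y - m by ring.
exact: expR_ge1Dx.
Qed.

Lemma key1 {R : realType} {qs q L A B : R} : 0 < q -> q < qs -> 0 < L ->
  expR ((q - 1) * L) * (1 + (- L - (q - 1) * L)) <= A ->
  expR ((q - 1) * L) * (1 + ((qs - 1) * L - (q - 1) * L)) <= B ->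
  A = 2^-1 -> B = qs * L + 1 ->
  expR ((q - 1) * L) - 1 < q * L.
Proof.
move=> q0 qqs L0 hA hB eA eB.
set e := expR _ in hA hB *.
have qq : 0 <= qs - q by lra.
have t1 := ler_wpM2l qq hA.
have t2 := ler_wpM2l (ltW q0) hB.
have : qs * e <= (qs - q) * A + q * B.
  have -> : qs * e = (qs - q) * (e * (1 + (- L - (q - 1) * L))) + q * (e * (1 + ((qs - 1) * L - (q - 1) * L))) by ring.
  exact: lerD.
rewrite eA eB => h.
nra.
Qed.

Lemma key2 {R : realType} {q p L E1 w c : R} : 0 < q -> q < p -> 0 < L -> 0 < E1 -> 0 < w ->
  w * (1 + (p - q) * L) <= 1 -> c = E1 / 2 - 1 ->
  (p - q) * ((`|c| + 1) * L) < q * L - c ->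
  w / E1 / p - 1 / E1 / q - (1 / p - 1 / q) / 2 < 0.
Proof.
move=> q0 qp L0 E0 w0 hw ec hh.
have p0 : 0 < p by lra.
set h := p - q in hw hh.
have h0 : 0 < h by rewrite /h; lra.
have hL0 : 0 < h * L by exact: mulr_gt0.
have cab : c <= `|c| by exact: ler_norm.
have ca0 : 0 <= `|c| by exact: normr_ge0.
have i1 : `|c| * (h * L) < q * L - c by nra.
have i2 : c * (h * L) <= `|c| * (h * L) by nra.
have S0 : q * w - q + h * c < 0.
  have : (1 + h * L) * (q * w - q + h * c) <= h * (c + `|c| * (h * L) - q * L).
    have : q * (w * (1 + h * L)) <= q * 1 by rewrite ler_pM2l.
    nra.
  have : h * (c + `|c| * (h * L) - q * L) < 0 by rewrite pmulr_rlt0 //; lra.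
  nra.
have e : w / E1 / p - 1 / E1 / q - (1 / p - 1 / q) / 2 = (q * w - q + h * c) / (p * q * E1).
  rewrite /h ec; field; lra.
rewrite e pmulr_llt0 // invr_gt0; apply: mulr_gt0 => //; exact: mulr_gt0.
Qed.
Lemma pow2E (R : realType) (x : R) : 2 `^ x = expR (x * ln 2).
Proof. by rewrite /powR gt_eqF. Qed.

Lemma expRmL (R : realType) : expR (- ln 2) = 2^-1 :> R.
Proof. by rewrite expRN lnK // posrE. Qed.

Lemma fact1 {R : realType} (qs q : R) : 0 < qs -> qs * ln 2 = 2 `^ (qs - 1) - 1 ->
  0 < q < qs -> 2 `^ (q - 1) - 1 < q * ln 2.
Proof.
move=> qs0 hqs /andP[q0 qqs].
have L0 : 0 < ln 2 :> R by apply: ln_gt0; lra.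
rewrite pow2E.
have hA := @expR_tangent _ ((q - 1) * ln 2) (- ln 2).
have hB := @expR_tangent _ ((q - 1) * ln 2) ((qs - 1) * ln 2).
apply: (key1 q0 qqs L0 hA hB).
  by rewrite expRmL.
rewrite -pow2E; lra.
Qed.

Lemma fact2 {R : realType} (q p : R) : 0 < q -> q < p ->
  (p - q) * ((`|2 `^ (q - 1) - 1| + 1) * ln 2) < q * ln 2 - (2 `^ (q - 1) - 1) ->
  Vpot p q (2^-1) - Vpot p q 1 / 2 < 0.
Proof.
move=> q0 qp hh.
have L0 : 0 < ln 2 :> R by apply: ln_gt0; lra.
have p0 : 0 < p by lra.
set L := ln 2 in L0 hh *.
set c := 2 `^ (q - 1) - 1 in hh.
set E1 := expR (q * L).
set w := expR (- ((p - q) * L)).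
have ec : c = E1 / 2 - 1.
  rewrite /c pow2E /E1 -expRmL -expRD; congr (expR _ - 1); rewrite /L; ring.
have hw : w * (1 + (p - q) * L) <= 1.
  have e1 : w * expR ((p - q) * L) = 1 by rewrite /w expRN mulVf // gt_eqF // expR_gt0.
  rewrite -[X in _ <= X]e1 ler_pM2l ?expR_gt0 //; exact: expR_ge1Dx.
have := key2 q0 qp L0 (expR_gt0 _) (expR_gt0 _) hw ec hh.
have eh : `|2^-1| = 2^-1 :> R by rewrite ger0_norm.
have ln2V : ln (2^-1) = - L :> R by rewrite lnV // posrE.
have e2 : (2^-1) `^ p = w / E1 :> R.
  rewrite /powR gt_eqF // ln2V /w /E1 -expRN -expRD; congr expR; ring.
have e3 : (2^-1) `^ q = 1 / E1 :> R.
  rewrite /powR gt_eqF // ln2V /E1 mul1r -expRN; congr expR; ring.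
rewrite /Vpot eh normr1 e2 e3 !powR1.
congr (_ < _); rewrite /L; field; lra.
Qed.

Lemma mpow {R : realType} (lam : R) : measurable_fun setT (fun x : R => `|x| `^ lam).
Proof.
apply: (@measurableT_comp _ _ _ _ _ _ (fun x : R => x `^ lam)); first exact: measurable_powR.
exact: normr_measurable.
Qed.

Lemma mVpot {R : realType} (p q : R) : measurable_fun setT (Vpot p q).
Proof.
rewrite /Vpot; apply: measurable_funB; apply: measurable_funM => //; exact: mpow.
Qed.

Lemma mVx {R : realType} (p q x : R) : measurable_fun setT (fun y : R => Vpot p q (x - y)).
Proof.
exact: (measurableT_comp (f := Vpot p q) (g := fun y : R => x - y) (mVpot p q)
  (measurable_funB (f := fun=> x) (g := id) (measurable_cst _) (@measurable_id _ _ _))).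
Qed.

Lemma mVs {R : realType} (p q a1 a2 a3 y1 y2 y3 : R) :
  measurable_fun setT (fun x : R => a1 * Vpot p q (x - y1) + a2 * Vpot p q (x - y2) + a3 * Vpot p q (x - y3)).
Proof.
have h y : measurable_fun setT (fun x : R => Vpot p q (x - y)).
  exact: (measurableT_comp (f := Vpot p q) (g := fun x : R => x - y) (mVpot p q)
    (measurable_funB (f := id) (g := fun=> y) (@measurable_id _ _ _) (measurable_cst _))).
by apply: measurable_funD; [apply: measurable_funD|]; apply: measurable_funM => //.
Qed.

Lemma mVs2 {R : realType} (p q a1 a2 y1 y2 : R) :
  measurable_fun setT (fun x : R => a1 * Vpot p q (x - y1) + a2 * Vpot p q (x - y2)).
Proof.
have h y : measurable_fun setT (fun x : R => Vpot p q (x - y)).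
  exact: (measurableT_comp (f := Vpot p q) (g := fun x : R => x - y) (mVpot p q)
    (measurable_funB (f := id) (g := fun=> y) (@measurable_id _ _ _) (measurable_cst _))).
by apply: measurable_funD; apply: measurable_funM => //.
Qed.

Lemma V0 {R : realType} (p q : R) : p != 0 -> q != 0 -> Vpot p q 0 = 0.
Proof. by move=> p0 q0; rewrite /Vpot normr0 !powR0 // !mul0r subrr. Qed.

Lemma VN {R : realType} (p q x : R) : Vpot p q (- x) = Vpot p q x.
Proof. by rewrite /Vpot normrN. Qed.

Theorem proposition2 (R : realType) (qstar q : R) :
  0 < qstar -> qstar * ln 2 = 2 `^ (qstar - 1) - 1 ->
  0 < q < qstar ->
  exists pstar : R, q < pstar /\
    forall p : R, q < p < pstar ->
    forall lam : R, 1 <= lam ->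
      ~ local_minimizer lam (energy p q) rho_star.
Proof.
move=> qs0 hqs hq; have /andP[q0 qqs] := hq.
have hc := @fact1 _ qstar q qs0 hqs hq.
pose c := 2 `^ (q - 1) - 1.
have L0 : 0 < ln 2 :> R by apply: ln_gt0; lra.
have den0 : 0 < (`|c| + 1) * ln 2.
  by apply: mulr_gt0 => //; rewrite ltr_pwDr ?normr_ge0.
exists (q + (q * ln 2 - c) / ((`|c| + 1) * ln 2)); split.
  by rewrite ltrDl divr_gt0 // subr_gt0.
move=> p /andP[qp pps] lam lam1 [fm [eta [eta0 Hmin]]].
have hh : (p - q) * ((`|c| + 1) * ln 2) < q * ln 2 - c.
  by rewrite -ltr_pdivlMr //; lra.
have D0 := @fact2 _ q p q0 qp hh.
have p0 : 0 < p by lra.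
have lam0 : 0 < lam by lra.
pose Vh := Vpot p q (2^-1).
pose V1 := Vpot p q 1.
pose K := V1 / 4 - Vh.
pose b := Num.min (Num.min (2^-1) (eta `^ lam)) ((- (Vh - V1 / 2)) / (`|K| + 1) / 2).
have K0 : 0 < `|K| + 1 by rewrite ltr_pwDr ?normr_ge0.
have b0 : 0 < b.
  rewrite /b !lt_min powR_gt0 // andbT; apply/andP; split; first lra.
  by rewrite divr_gt0 // divr_gt0 //; rewrite /Vh /V1; lra.
have bh : b <= 2^-1 by rewrite /b !ge_min lexx.
have beta : b <= eta `^ lam by rewrite /b !ge_min lexx orbT.
have bK : b * (`|K| + 1) <= - (Vh - V1 / 2) / 2.
  have : b <= (- (Vh - V1 / 2)) / (`|K| + 1) / 2 by rewrite /b !ge_min lexx orbT.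
  move=> h1; have : b * 2 <= - (Vh - V1 / 2) / (`|K| + 1).
    by rewrite -ler_pdivlMr //.
  rewrite ler_pdivlMr //; lra.
have ha : 0 <= (1 - b) / 2 by apply: divr_ge0; lra.
have hb2 : 0 <= b / 2 by apply: divr_ge0; lra.
pose wa := NngNum ha.
pose wb := NngNum (ltW b0).
pose wb2 := NngNum hb2.
pose mu3 := measure_add (sd wa (0:R)) (measure_add (sd wa (1:R)) (sd wb (2^-1 : R))).
have mu3T : mu3 setT = 1%E.
  rewrite /mu3 m3E !indicE !in_setT /=; congr EFin; lra.
pose rho' : probability R R := mnormalize mu3 (@dirac _ R 0 R).
have rho'E : (rho' : set R -> \bar R) = mu3 by apply: mnormE.
pose mu4 := measure_add (sd wa ((0, 0) : R * R)) (measure_add (sd wa ((1, 1) : R * R))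
   (measure_add (sd wb2 ((0, 2^-1) : R * R)) (sd wb2 ((1, 2^-1) : R * R)))).
have mu4T : mu4 setT = 1%E.
  rewrite /mu4 m4E !indicE !in_setT /=; congr EFin; lra.
pose pi : probability (R * R)%type R := mnormalize mu4 (@dirac _ (R * R)%type (0, 0) R).
have piE : (pi : set (R * R) -> \bar R) = mu4 by apply: mnormE.
have cpl : coupling rho_star rho' pi.
  split.
    move=> A _; rewrite piE /mu4 m4E rho_starE m2E !indicE !in_setX /= !in_setT !andbT.
    by case: (0 \in A); case: (1 \in A) => /=; congr EFin; lra.
  move=> B _; rewrite piE /mu4 m4E rho'E /mu3 m3E !indicE !in_setX /= !in_setT /=.
  by case: (0 \in B); case: (1 \in B); case: (2^-1 \in B) => /=; congr EFin; lra.
have lamn0 : lam != 0 by rewrite gt_eqF.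
have h12 : (2^-1 : R) `^ lam <= 1.
  by rewrite /powR gt_eqF // expR_le1 lnV ?posrE // mulrN oppr_le0 mulr_ge0 // ltW.
have mcost : measurable_fun setT (fun z : R * R => `|z.1 - z.2| `^ lam).
  exact: (measurableT_comp (f := fun x : R => `|x| `^ lam) (g := fun z : R * R => z.1 - z.2)
    (mpow lam) (measurable_funB (f := fst) (g := snd) measurable_fst measurable_snd)).
have cost : (\int[pi]_z (`|z.1 - z.2| `^ lam)%:E = (b * (2^-1) `^ lam)%:E)%E.
  rewrite piE /mu4 int4 //=; congr EFin.
  have e1 : (1 - 2^-1 : R) = 2^-1 by lra.
  rewrite !subrr sub0r normrN e1 normr0 powR0 // ger0_norm //; lra.
have wc : (wass_cost lam rho_star rho' <= (b * (2^-1) `^ lam)%:E)%E.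
  rewrite /wass_cost -cost; apply: ereal_inf_lbound; by exists pi.
have wc0 : (0 <= wass_cost lam rho_star rho')%E.
  apply: le_ereal_inf_tmp => x [pi' _ <-]; apply: integral_ge0 => z _.
  by rewrite lee_fin powR_ge0.
have fle : fine (wass_cost lam rho_star rho') <= eta `^ lam.
  move: wc wc0; case: (wass_cost lam rho_star rho') => [r| |] /=.
  - move=> h1 h2; rewrite lee_fin in h1; nra.
  - by rewrite leNgt ltry.
  - by move=> _ h; exfalso; move: h; rewrite leeNy_eq.
have dist : wass_dist lam rho_star rho' <= eta.
  rewrite /wass_dist.
  have hl : 0 <= lam^-1 by rewrite invr_ge0 ltW.
  have hx : fine (wass_cost lam rho_star rho') \in Num.nneg by rewrite nnegrE fine_ge0.
  have hy : eta `^ lam \in Num.nneg by rewrite nnegrE powR_ge0.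
  have := ge0_ler_powR hl hx hy fle.
  by rewrite -powRrM mulfV // powRr1 // ltW.
have fmom : finite_moment lam rho'.
  rewrite /finite_moment /moment rho'E /mu3 int3 ?ltry //; exact: mpow.
have := Hmin rho' fmom dist.
have E1 : energy p q rho_star = (V1 / 4)%:E.
  rewrite /energy rho_starE.
  under eq_integral => x _ do rewrite (int2 _ _ _ _ _ (mVx p q x)).
  rewrite (int2 _ _ _ _ _ (mVs2 _ _ _ _ _ _)) -EFinM; congr EFin.
  rewrite /= !subrr !subr0 sub0r VN V0 ?gt_eqF // /V1; lra.
have E2 : energy p q rho' = (((1 - b) / 2) ^+ 2 * V1 + 2 * ((1 - b) / 2) * b * Vh)%:E.
  rewrite /energy rho'E /mu3.
  under eq_integral => x _ do rewrite (int3 _ _ _ _ _ _ _ (mVx p q x)).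
  rewrite (int3 _ _ _ _ _ _ _ (mVs _ _ _ _ _ _ _ _)) -EFinM; congr EFin.
  have e1 : (1 - 2^-1 : R) = 2^-1 by lra.
  have e2 : (2^-1 - 1 : R) = - 2^-1 by lra.
  rewrite /= !subrr !subr0 !sub0r e1 e2 !VN V0 ?gt_eqF // /V1 /Vh.
  move: (Vpot p q 1) (Vpot p q 2^-1) => x y; clearbody b; by field.
rewrite E1 E2 lee_fin => H.
have hK : b * K <= b * `|K| by apply: ler_wpM2l; [exact: ltW | exact: ler_norm].
have pos : 0 < b * (- (Vh - V1 / 2) - b * K).
  apply: mulr_gt0 => //; rewrite -/Vh -/V1 in D0; lra.
have id : V1 / 4 - (((1 - b) / 2) ^+ 2 * V1 + 2 * ((1 - b) / 2) * b * Vh)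
   = b * (- (Vh - V1 / 2) - b * K).
  rewrite /K; clearbody b; clear -b; by field.
lra.
Qed.
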